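(* For each integer $t\ge0$ and each even integer $n\ge4$, there exists a binary even-like Euclidean self-orthogonal $[2^{t+1}n,\,n+t,\,2^{t+2}]_2$ code.
   Context: A binary code is even-like if every codeword has even Hamming weight. A code $\mathcal{C}$ is Euclidean self-orthogonal if $\mathcal{C}\subseteq\mathcal{C}^{\perp_E}$, where $\perp_E$ is the dual under $\sum_ix_iy_i$. *)

(* Defs.v *)
From HB Require Import structures.
From mathcomp Require Import all_boot all_order all_algebra.
Set Implicit Arguments. Unset Strict Implicit. Unset Printing Implicit Defensive.
Import GRing.Theory.
Local Open Scope ring_scope.

Notation bcode N := {vspace 'rV['F_2]_N}.

Definition wt (N : nat) (x : 'rV['F_2]_N) : nat := #|[set i | x 0 i != 0]|.

Definition dotE (N : nat) (x y : 'rV['F_2]_N) : 'F_2 := \sum_i x 0 i * y 0 i.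

Definition even_like (N : nat) (C : bcode N) : Prop :=
  forall c, c \in C -> ~~ odd (wt c).

Definition dualE (N : nat) (C : bcode N) : {set 'rV['F_2]_N} :=
  [set y | [forall x, (x \in C) ==> (dotE x y == 0)]].

Definition self_orthogonalE (N : nat) (C : bcode N) : Prop :=
  forall x, x \in C -> x \in dualE C.

Definition min_distance (N : nat) (C : bcode N) (d : nat) : Prop :=
  (exists2 c, c \in C & (c != 0) && (wt c == d)) /\
  (forall c, c \in C -> c != 0 -> (d <= wt c)%N).

Definition is_code (N : nat) (C : bcode N) (k d : nat) : Prop :=
  \dim C = k /\ min_distance C d.

(* Main.v *)
Require Import Defs.
From mathcomp Require Import all_boot all_order all_algebra.
Set Implicit Arguments. Unset Strict Implicit. Unset Printing Implicit Defensive.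
Import GRing.Theory.
Local Open Scope ring_scope.


Lemma F2_cases (a : 'F_2) : a = 0 \/ a = 1.
Proof. by case: a => [[|[|]]] //= H; [left|right]; apply: val_inj. Qed.

Lemma two_F2 : (2%:R : 'F_2) = 0.
Proof. by apply: val_inj. Qed.

Lemma natF2 m : (m%:R : 'F_2) = (odd m)%:R.
Proof.
by rewrite -[in LHS](odd_double_half m) natrD -mul2n natrM two_F2 mul0r addr0.
Qed.

Lemma natF2_eq0 m : ((m%:R : 'F_2) == 0) = ~~ odd m.
Proof. by rewrite natF2; case: (odd m); rewrite ?oner_eq0 ?eqxx. Qed.

Lemma wtE N (x : 'rV['F_2]_N) : wt x = (\sum_i (x 0%R i != 0%R : nat))%N.
Proof.
rewrite /wt -sum1dep_card big_mkcond /=; apply: eq_bigr => i _.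
by case: (_ != _).
Qed.

Lemma wt_row_mx N M (x : 'rV['F_2]_N) (y : 'rV['F_2]_M) :
  wt (row_mx x y) = (wt x + wt y)%N.
Proof.
rewrite !wtE big_split_ord /=; congr (_ + _)%N; apply: eq_bigr => i _.
  by rewrite row_mxEl.
by rewrite row_mxEr.
Qed.

Lemma dotE_row_mx N M (x x' : 'rV['F_2]_N) (y y' : 'rV['F_2]_M) :
  dotE (row_mx x y) (row_mx x' y') = dotE x x' + dotE y y'.
Proof.
rewrite /dotE big_split_ord /=; congr (_ + _); apply: eq_bigr => i _.
  by rewrite !row_mxEl.
by rewrite !row_mxEr.
Qed.

Lemma sumF2 N (x : 'rV['F_2]_N) : \sum_i x 0 i = (wt x)%:R.
Proof.
rewrite wtE natr_sum; apply: eq_bigr => i _.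
by case: (F2_cases (x 0 i)) => ->.
Qed.

Lemma wt_eq0 N (x : 'rV['F_2]_N) : wt x = 0%N -> x = 0.
Proof.
move=> /eqP; rewrite /wt cards_eq0 => /eqP H.
apply/matrixP => i j; rewrite (ord1 i) mxE.
have : j \notin [set i | x 0 i != 0] by rewrite H inE.
by rewrite inE negbK => /eqP.
Qed.


Lemma F2_id (a b c d : 'F_2) : (a + b) * (c + d) + a * c = a * d + b * c + b * d.
Proof.
by case: (F2_cases a) => ->; case: (F2_cases b) => ->; case: (F2_cases c) => ->;
  case: (F2_cases d) => ->; apply: val_inj.
Qed.

Lemma F2_one (a : 'F_2) : (nat_of_bool (a + 1 != 0)%R + nat_of_bool (a != 0)%R)%N = 1%N.
Proof. by case: (F2_cases a) => ->; rewrite ?add0r ?eqxx ?oner_eq0 //; rewrite (_ : 1 + 1 = 0) //; apply: val_inj. Qed.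

Lemma dot_shift N (x y : 'rV['F_2]_N) (b c : 'F_2) :
  ~~ odd N -> ~~ odd (wt x) -> ~~ odd (wt y) ->
  dotE (x + b *: const_mx 1) (y + c *: const_mx 1) + dotE x y = 0.
Proof.
move=> HN Hx Hy; rewrite /dotE -big_split /=.
rewrite (eq_bigr (fun i => x 0 i * c + b * y 0 i + b * c)); last first.
  by move=> i _; rewrite !mxE !mulr1 F2_id.
have ex : (wt x)%:R = 0 :> 'F_2 by apply/eqP; rewrite natF2_eq0.
have ey : (wt y)%:R = 0 :> 'F_2 by apply/eqP; rewrite natF2_eq0.
have eN : N%:R = 0 :> 'F_2 by apply/eqP; rewrite natF2_eq0.
rewrite !big_split /= -mulr_suml -mulr_sumr !sumF2 sumr_const card_ord.
by rewrite ex ey -mulr_natr eN mul0r !mulr0 !addr0.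
Qed.

Lemma wt_shift1 N (x : 'rV['F_2]_N) : wt (row_mx (x + const_mx 1) x) = N.
Proof.
rewrite wt_row_mx !wtE -big_split /=.
rewrite (eq_bigr (fun _ => 1%N)); first by rewrite sum1_card card_ord.
by move=> i _; rewrite !mxE F2_one.
Qed.


Section Step.
Variables (N k d : nat) (C : bcode N).
Hypotheses (HC : is_code C k d) (HE : even_like C) (HN : ~~ odd N)
  (Hd : (d + d <= N)%N) (HN0 : (0 < N)%N).

Let G : 'M['F_2]_(N, N + N) := row_mx 1%:M 1%:M.
Let dbl : 'Hom('rV['F_2]_N, 'rV['F_2]_(N + N)) := linfun (mulmxr G).
Let e : 'rV['F_2]_(N + N) := row_mx (const_mx 1) 0.
Let C' : bcode (N + N) := (dbl @: C + <[e]>)%VS.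

Lemma dblE x : dbl x = row_mx x x.
Proof. by rewrite lfunE /= /G mul_mx_row mulmx1. Qed.

Lemma memC' v : v \in C' ->
  exists x b, x \in C /\ v = row_mx (x + b *: const_mx 1) x.
Proof.
case/memv_addP => u /memv_imgP [x Hx ->] [w /vlineP [b ->] ->].
exists x, b; split => //.
by rewrite dblE /e scale_row_mx scaler0 add_row_mx addr0.
Qed.

Lemma dblC c : c \in C -> row_mx c c \in C'.
Proof.
move=> Hc; rewrite -dblE -[dbl c]addr0; apply: memv_add; last exact: mem0v.
exact: memv_img.
Qed.

Lemma dimC' : \dim C' = k.+1.
Proof.
rewrite /C' dimv_disjoint_sum.
  rewrite limg_dim_eq; last first.
    have /eqP -> : lker dbl == 0%VS.
      by apply/lker0P => x y; rewrite !dblE => /eq_row_mx [].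
    by rewrite capv0.
  rewrite dim_vline (_ : e != 0) ?addn1; first by case: HC => ->.
  apply/eqP => /matrixP /(_ 0 (lshift N (Ordinal HN0))).
  by rewrite row_mxEl !mxE => /eqP; rewrite oner_eq0.
apply/eqP; rewrite -subv0; apply/subvP => v /memv_capP [].
case/memv_imgP => x _ -> /vlineP [b].
rewrite dblE /e scale_row_mx scaler0 => /eq_row_mx [_ ->].
by rewrite row_mx0 memv0.
Qed.

Lemma wtC' x b : x \in C ->
  wt (row_mx (x + b *: const_mx 1) x) = if b == 0 then (wt x + wt x)%N else N.
Proof.
move=> Hx; case: (F2_cases b) => ->; rewrite ?eqxx.
  by rewrite scale0r addr0 wt_row_mx.
by rewrite scale1r wt_shift1 oner_eq0.
Qed.

Lemma step_props : is_code C' k.+1 (d + d) /\ even_like C' /\ self_orthogonalE C'.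
Proof.
case: HC => _ [[c Hc /andP [Hc0 /eqP Hwc]] Hmin].
split; [split; [exact: dimC'|split]|split].
- exists (row_mx c c); first exact: dblC.
  rewrite wt_row_mx Hwc eqxx andbT; apply: contra Hc0 => /eqP.
  by rewrite -row_mx0 => /eq_row_mx [-> _].
- move=> v /memC' [x [b [Hx ->]]] Hv0; rewrite wtC' //.
  case: eqP => [Hb|//]; apply: leq_add; apply: Hmin => //;
  apply: contra Hv0 => /eqP ->; by rewrite Hb scale0r addr0 row_mx0.
- move=> v /memC' [x [b [Hx ->]]]; rewrite wtC' //.
  by case: eqP => // _; rewrite addnn odd_double.
- move=> v /memC' [x [b [Hx ->]]].
  rewrite /dualE inE; apply/forallP => w; apply/implyP => /memC' [y [b' [Hy ->]]].
  by rewrite dotE_row_mx; apply/eqP; apply: dot_shift; [exact: HN | exact: (HE Hy) | exact: (HE Hx)].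
Qed.

End Step.

Lemma step N k d (C : bcode N) : is_code C k d -> even_like C -> ~~ odd N ->
  (d + d <= N)%N -> (0 < N)%N ->
  exists C' : bcode (N + N),
    is_code C' k.+1 (d + d) /\ even_like C' /\ self_orthogonalE C'.
Proof. move=> HC HE HN Hd HN0; eexists; exact: (step_props HC HE HN Hd HN0). Qed.


Lemma base n : (2 <= n)%N ->
  exists C : bcode n, is_code C n.-1 2 /\ even_like C.
Proof.
move=> Hn.
pose f : 'Hom('rV['F_2]_n, 'rV['F_2]_1) := linfun (mulmxr (const_mx 1 : 'M['F_2]_(n, 1))).
have fE x : (f x == 0) = (\sum_i x 0 i == 0).
  have e00 : f x 0 0 = \sum_i x 0 i.
    by rewrite lfunE /= !mxE; apply: eq_bigr => i _; rewrite mxE mulr1.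
  rewrite -e00; apply/eqP/eqP => [->|H]; first by rewrite mxE.
  by apply/matrixP => i j; rewrite (ord1 i) (ord1 j) H mxE.
have memE x : (x \in lker f) = ~~ odd (wt x) by rewrite memv_ker fE sumF2 natF2_eq0.
have H0 : (0 < n)%N by apply: leq_trans Hn.
have H1 : (1 < n)%N by [].
pose i0 : 'I_n := Ordinal H0.
pose i1 : 'I_n := Ordinal H1.
pose u : 'rV['F_2]_n := delta_mx 0 i0.
have fu : f u != 0.
  rewrite fE /u (bigD1 i0) //= big1 ?addr0; first by rewrite mxE !eqxx oner_eq0.
  by move=> j /negbTE Hj; rewrite mxE Hj andbF.
exists (lker f); split; last by move=> c; rewrite memE.
split.
  have := limg_ker_dim f fullv; rewrite capfv dimvf dim_matrix mul1r.
  have -> : \dim (f @: fullv) = 1%N.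
    apply/eqP; rewrite eqn_leq; apply/andP; split.
      by have := dimvS (subvf (f @: fullv)); rewrite dimvf dim_matrix.
    rewrite lt0n dimv_eq0; apply: contra fu => /eqP H.
    by rewrite -memv0 -H memv_img ?memvf.
  by move=> H; apply/eqP; rewrite -eqSS prednK // -addn1 H.
split.
  pose c : 'rV['F_2]_n := delta_mx 0 i0 + delta_mx 0 i1.
  have wc : wt c = 2%N.
    rewrite /wt (_ : [set i | c 0 i != 0] = [set i0; i1]) ?cards2 //.
    apply/setP => j; rewrite !inE !mxE.
    have Hne : i0 != i1 by [].
    case: (eqVneq j i0) => [->|Hj0]; first by rewrite (negbTE Hne) eqxx /=.
    by case: (j == i1); rewrite ?eqxx /= ?add0r ?addr0 ?oner_eq0 ?eqxx.
  exists c; last by rewrite wc eqxx andbT; apply/eqP => Hc; move: wc; rewrite Hc wtE big1 // => i _; rewrite mxE eqxx.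
  by rewrite memE wc.
move=> c; rewrite memE => Hev Hc0.
have : wt c != 0%N by apply: contra Hc0 => /eqP /wt_eq0 ->.
by case: (wt c) Hev => [|[|m]].
Qed.

Close Scope ring_scope.
Theorem theorem12 (t n : nat) :
  (4 <= n)%N -> ~~ odd n ->
  exists C : {vspace 'rV['F_2]_(2 ^ t.+1 * n)},
    is_code C (n + t) (2 ^ t.+2) /\ even_like C /\ self_orthogonalE C.
Proof.
move=> Hn Hodd.
elim: t => [|t [C [HC [HE _]]]].
  have [C [HC HE]] := base (leq_trans (isT : (2 <= 4)%N) Hn).
  have := step HC HE Hodd Hn (leq_trans (isT : (0 < 4)%N) Hn).
  by rewrite expn1 mul2n -addnn addn0 prednK // (leq_trans _ Hn).
have := step HC HE.
rewrite oddM oddX /= => /(_ isT).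
have -> : (2 ^ t.+2 + 2 ^ t.+2 = 2 ^ t.+3)%N by rewrite addnn -mul2n -expnS.
have -> : (2 ^ t.+1 * n + 2 ^ t.+1 * n = 2 ^ t.+2 * n)%N.
  by rewrite -mulnDl addnn -mul2n -expnS.
rewrite addnS; apply.
  rewrite (_ : 2 ^ t.+3 = 2 ^ t.+1 * 4)%N; first by rewrite leq_mul2l Hn orbT.
  by rewrite mulnC (expnS 2 t.+2) (expnS 2 t.+1) mulnA.
by rewrite muln_gt0 expn_gt0 (leq_trans _ Hn).
Qed.
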